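(* Let $k,d\geq 4$. Let $G$ be a finite $C_4$-free bipartite graph with vertex classes $A$ and $B$. Let $A=A_1\cup\dots\cup A_r$ and $B=B_1\cup\dots\cup B_s$ be partitions with $|A_i|\leq d^2$ and $|B_j|\leq d^2$ for all $i\in[r]$, $j\in[s]$. Define the graph $H$ on vertex set $\{a_1,\dots,a_r,b_1,\dots,b_s\}$ in which $a_ib_j$ is an edge exactly if $G$ has at least one edge between $A_i$ and $B_j$ (and there are no other edges). Suppose $H$ is $k$-degenerate. Then $d(G)\leq 13kd$.
   Context: $d(G)=2e(G)/|V(G)|$ is the average degree. A graph is $C_4$-free if it contains no $4$-cycle as a subgraph. A graph is $k$-degenerate if every subgraph of it has a vertex of degree at most $k$. *)

(* Defs.v *)
From HB Require Import structures.
From mathcomp Require Import all_boot all_order all_algebra.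
Set Implicit Arguments. Unset Strict Implicit. Unset Printing Implicit Defensive.
Import Order.TTheory GRing.Theory Num.Theory.

Definition simple_graph (T : finType) (e : rel T) : Prop :=
  irreflexive e /\ symmetric e.

Definition edge_set (T : finType) (e : rel T) : {set {set T}} :=
  [set [set x; y] | x in T, y in T & e x y].

(* average degree d(G) = 2 e(G) / |V(G)| (as a rational; 0 for empty graph) *)
Definition avg_degree (T : finType) (e : rel T) : rat :=
  ((2 * #|edge_set e|)%:R / #|T|%:R)%R.

Definition C4_free (T : finType) (e : rel T) : Prop :=
  forall v1 v2 v3 v4 : T, uniq [:: v1; v2; v3; v4] ->
    ~ [&& e v1 v2, e v2 v3, e v3 v4 & e v4 v1].

Definition bipartite_with (T : finType) (e : rel T) (A B : {set T}) : Prop :=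
  [/\ A :&: B = set0, A :|: B = [set: T] &
      forall x y, e x y -> (x \in A) && (y \in B) || (x \in B) && (y \in A)].

(* The graph H on the parts PA (vertices a_i) and PB (vertices b_j):
   X ~ Y iff one is a part of A, the other a part of B, and G has an
   edge between them. *)
Definition part_graph (T : finType) (e : rel T) (PA PB : {set {set T}}) :
  rel {set T} :=
  fun X Y => ((X \in PA) && (Y \in PB) || (X \in PB) && (Y \in PA)) &&
             [exists x in X, exists y in Y, e x y].

Definition degenerate (U : finType) (V : {set U}) (h : rel U) (k : nat) : Prop :=
  forall W : {set U}, W \subset V -> W != set0 ->
    exists2 v, v \in W & #|[set w in W | h v w]| <= k.

(* Main.v *)
Require Import Defs.
From HB Require Import structures.
From mathcomp Require Import all_boot all_order all_algebra.
Import Order.TTheory GRing.Theory Num.Theory.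
From mathcomp Require Import zify.
Set Implicit Arguments. Unset Strict Implicit. Unset Printing Implicit Defensive.
Definition Dg (T : finType) (e : rel T) (x : T) (Y : {set T}) : nat :=
  \sum_(y in Y) (e x y : nat).

Lemma c4_count (T : finType) (e : rel T) (Y : {set T}) :
  simple_graph e -> C4_free e ->
  \sum_x Dg e x Y * (Dg e x Y).-1 <= #|Y| * #|Y|.-1.
Proof.
move=> [irr sym] c4.
have ne : forall a b, e a b -> a != b.
  by move=> a b; apply: contraTneq => ->; rewrite irr.
have step : forall x, Dg e x Y * (Dg e x Y).-1 =
   \sum_(u in Y) \sum_(u' in Y | u' != u) (e x u && e x u' : nat).
  move=> x; rewrite {1}/Dg big_distrl /=; apply: eq_bigr => u uY.
  rewrite /Dg (bigD1 u uY) /=.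
  case: (boolP (e x u)) => exu /=.
    by rewrite mul1n add0n.
  by rewrite mul0n big1.
under eq_bigr => x _ do rewrite step.
rewrite exchange_big /=.
apply: leq_trans (_ : \sum_(u in Y) \sum_(u' in Y | u' != u) 1 <= _).
  apply: leq_sum => u uY; rewrite exchange_big /=.
  apply: leq_sum => u' /andP [u'Y nu].
  case: (pickP (fun x => e x u && e x u')) => [x0 /andP [a0 b0] | none].
    rewrite (bigD1 x0) //= a0 b0 big1 // => x nx.
    apply/eqP; rewrite eqb0; apply/negP => /andP [a b].
    apply: (c4 x0 u x u'); last first.
      by rewrite a0 (sym u x) a b (sym u' x0) b0.
    rewrite /= !inE !negb_or (ne _ _ a0) (ne _ _ b0) eq_sym nx /=.
    rewrite eq_sym (ne _ _ a) eq_sym nu /= (ne _ _ b) //.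
  by rewrite big1 // => x _; rewrite none.
rewrite (eq_bigr (fun _ => #|Y|.-1)) ?sum_nat_const //.
move=> u uY; rewrite -(sum1_card (mem Y)) (bigD1 u uY) /=.
rewrite add0n.
by apply: eq_bigl => i.
Qed.

Lemma heavy_bound (T : finType) (e : rel T) (Y : {set T}) (d : nat) :
  simple_graph e -> C4_free e -> 0 < d -> #|Y| <= d ^ 2 ->
  \sum_x (d < Dg e x Y) * Dg e x Y <= d * #|Y|.
Proof.
move=> sg c4 d0 hY.
rewrite -(leq_pmul2l d0).
apply: leq_trans (_ : \sum_x Dg e x Y * (Dg e x Y).-1 <= _).
  rewrite big_distrr /=; apply: leq_sum => x _.
  case: ltnP => h /=; last by rewrite mul0n muln0.
  rewrite mul1n mulnC leq_mul2l; apply/orP; right; by case: (Dg e x Y) h.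
apply: (leq_trans (c4_count Y sg c4)).
rewrite mulnA mulnn (mulnC _ #|Y|).
apply: leq_mul => //. apply: leq_trans hY; exact: leq_pred.
Qed.

Lemma handshake (T : finType) (e : rel T) :
  simple_graph e -> 2 * #|edge_set e| <= \sum_x \sum_y (e x y : nat).
Proof.
move=> [irr sym].
set r := @enum_rank T.
set S1 := [set p : T * T | e p.1 p.2 && (r p.1 < r p.2)].
have sub : edge_set e \subset (fun p : T * T => [set p.1; p.2]) @: S1.
  apply/subsetP => E /imset2P [x y _].
  rewrite inE => /andP [_ exy] ->.
  case: (ltngtP (r x) (r y)) => h.
  - by apply/imsetP; exists (x, y); rewrite // inE /= exy h.
  - apply/imsetP; exists (y, x); first by rewrite inE /= -sym exy h.
    by rewrite /= setUC.
  - by move: h => /val_inj/enum_rank_inj exy'; rewrite exy' irr in exy.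
have c1 : #|edge_set e| <= #|S1|.
  by apply: leq_trans (subset_leq_card sub) (leq_imset_card _ _).
apply: leq_trans (_ : 2 * #|S1| <= _); first by rewrite leq_mul2l c1 orbT.
have cS : #|S1| = \sum_p (p \in S1 : nat).
  by rewrite -sum1_card big_mkcond /=; apply: eq_bigr => p _; case: (p \in S1).
have swapS : #|S1| = \sum_p ((p.2, p.1) \in S1 : nat).
  rewrite cS (reindex_inj (h := fun p : T * T => (p.2, p.1))) /=.
    by apply: eq_bigr => -[a b].
  by move=> [a b] [a' b'] /= [-> ->].
rewrite mul2n -addnn {1}cS swapS -big_split /= pair_big /=.
apply: leq_sum => -[a b] _ /=; rewrite !inE /=.
case: (ltngtP (r a) (r b)); rewrite ?andbT ?andbF ?addn0 ?add0n // => _.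
by rewrite sym.
Qed.

Theorem lemma17 (k d : nat) (T : finType) (e : rel T) (A B : {set T})
    (PA PB : {set {set T}}) :
  4 <= k -> 4 <= d ->
  simple_graph e -> C4_free e -> bipartite_with e A B ->
  partition PA A -> partition PB B ->
  (forall X, X \in PA -> #|X| <= d ^ 2) ->
  (forall Y, Y \in PB -> #|Y| <= d ^ 2) ->
  degenerate (PA :|: PB) (part_graph e PA PB) k ->
  (avg_degree e <= (13 * k * d)%:R)%R.
Proof.
move=> k4 d4 sg c4 [AB0 ABT bip] pA pB sA sB deg.
have [irr sym] := sg.
set PP := PA :|: PB.
set P := fun x => if x \in A then pblock PA x else pblock PB x.
move: pA pB => /and3P [/eqP cA tA nA] /and3P [/eqP cB tB nB].
have subc : forall (Q : {set {set T}}) X x, X \in Q -> x \in X -> x \in cover Q.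
  by move=> Q X x XQ xX; apply/bigcupP; exists X.
have AnB : forall x, x \in A -> x \in B -> False.
  move=> x xA xB; have : x \in A :&: B by rewrite inE xA xB.
  by rewrite AB0 inE.
have AorB : forall x, (x \in A) || (x \in B).
  move=> x; have : x \in A :|: B by rewrite ABT inE.
  by rewrite inE.
have F1 : forall Y y, Y \in PP -> y \in Y -> P y = Y.
  move=> Y y; rewrite inE => /orP [YA|YB] yY; rewrite /P.
  - have yA : y \in A by rewrite -cA; apply: subc yY.
    by rewrite yA; apply: def_pblock.
  - have yB : y \in B by rewrite -cB; apply: subc yY.
    have -> : (y \in A) = false by apply/negP => yA; exact: AnB yA yB.
    by apply: def_pblock.
have F2 : forall y, P y \in PP /\ y \in P y.
  move=> y; rewrite /P; case: ifP => yA.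
  - have yc : y \in cover PA by rewrite cA.
    by split; [rewrite inE pblock_mem | rewrite mem_pblock].
  - have yc : y \in cover PB by rewrite cB; have := AorB y; rewrite yA.
    by split; [rewrite inE pblock_mem ?orbT | rewrite mem_pblock].
have F3 : forall X x, X \in PP -> x \in X ->
    (x \in A -> X \in PA) /\ (x \in B -> X \in PB).
  move=> X x XP xX; rewrite -(F1 X x XP xX) /P; split => h.
    by rewrite h pblock_mem // cA.
  rewrite ifN; first by apply: pblock_mem; rewrite cB.
  by apply/negP => xA; exact: AnB xA h.
have psum : forall f : T -> nat, \sum_y f y = \sum_(Y in PP) \sum_(y in Y) f y.
  move=> f; rewrite (partition_big P (mem PP)) /=; last by move=> y _; case: (F2 y).
  apply: eq_bigr => Y YP; apply: eq_bigl => y /=.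
  apply/eqP/idP => [<- | yY]; first by case: (F2 y).
  exact: F1.
have hedge : forall X Y x y, X \in PP -> Y \in PP -> x \in X -> y \in Y ->
    e x y -> part_graph e PA PB X Y.
  move=> X Y x y XP YP xX yY exy; rewrite /part_graph; apply/andP; split.
    case/orP: (bip x y exy) => /andP [xa yb]; apply/orP; [left|right].
      by rewrite (proj1 (F3 X x XP xX) xa) (proj2 (F3 Y y YP yY) yb).
    by rewrite (proj2 (F3 X x XP xX) xa) (proj1 (F3 Y y YP yY) yb).
  by apply/existsP; exists x; rewrite xX /=; apply/existsP; exists y; rewrite yY exy.
set hv := fun x y => (d < Dg e x (P y)) || (d < Dg e y (P x)).
set g := fun X Y : {set T} => \sum_(x in X) \sum_(y in Y) (e x y && ~~ hv x y : nat).
have gsym : forall X Y, g X Y = g Y X.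
  move=> X Y; rewrite /g exchange_big; apply: eq_bigr => y _; apply: eq_bigr => x _.
  by rewrite sym /hv orbC.
have cardsum : forall (W : {set {set T}}) (p : {set T} -> bool),
    #|[set w in W | p w]| = \sum_(w in W) (p w : nat).
  move=> W p; rewrite -sum1_card.
  rewrite (eq_bigl (fun w => (w \in W) && p w)); last by move=> w; rewrite inE.
  by rewrite big_mkcondr /=; apply: eq_bigr => w _; case: (p w).
have gX0 : forall (W : {set {set T}}) (X0 : {set T}) (x : T), W \subset PP -> X0 \in PP -> x \in X0 ->
    \sum_(Y in W) \sum_(y in Y) (e x y && ~~ hv x y : nat) <=
    d * #|[set w in W | part_graph e PA PB X0 w]|.
  move=> W X0 x WP X0P xX0.
  rewrite (cardsum W (part_graph e PA PB X0)) big_distrr /=; apply: leq_sum => Y YW.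
  have YP := subsetP WP Y YW.
  case hX: (part_graph e PA PB X0 Y); rewrite ?muln1 ?muln0.
    case: (ltnP d (Dg e x Y)) => hd.
      by rewrite big1 // => y yY; rewrite /hv (F1 Y y YP yY) hd /= andbF.
    apply: leq_trans hd; rewrite /Dg; apply: leq_sum => y _.
    by case: (e x y); case: (hv x y).
  rewrite leqn0 sum_nat_eq0; apply/forallP => y; apply/implyP => yY.
  case exy: (e x y) => //=.
  by rewrite (hedge _ _ _ _ X0P YP xX0 yY exy) in hX.
have light : forall n (W : {set {set T}}), #|W| <= n -> W \subset PP ->
    \sum_(X in W) \sum_(Y in W) g X Y <= 2 * k * d * \sum_(X in W) #|X|.
  elim=> [|n IH] W.
    by rewrite leqn0 cards_eq0 => /eqP -> _; rewrite !big_set0.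
  move=> cW WP; case: (eqVneq W set0) => [-> | W0]; first by rewrite !big_set0.
  have [X0 X0W degX0] := deg W WP W0.
  have X0P := subsetP WP X0 X0W.
  set W' := W :\ X0.
  have cW' : #|W'| <= n by move: cW; rewrite (cardsD1 X0 W) X0W.
  have W'P : W' \subset PP by apply: subset_trans (subsetDl _ _) WP.
  have bX0 : \sum_(Y in W) g X0 Y <= k * d * #|X0|.
    rewrite /g exchange_big /= -sum1_card big_distrr /= muln1.
    apply: leq_sum => x xX0.
    apply: leq_trans (gX0 W X0 x WP X0P xX0) _.
    by rewrite mulnC leq_mul2r degX0 orbT.
  have bX0' : \sum_(Y in W') g Y X0 <= k * d * #|X0|.
    apply: leq_trans bX0.
    under eq_bigr => Y _ do rewrite gsym.
    by rewrite [X in _ <= X](big_setD1 X0 X0W) /= leq_addl.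
  rewrite (big_setD1 X0 X0W) /=.
  rewrite [Z in _ + Z <= _](eq_bigr (fun X => g X X0 + \sum_(Y in W') g X Y)); last first.
    by move=> X _; rewrite (big_setD1 X0 X0W).
  rewrite big_split /= [Z in _ <= _ * Z](big_setD1 X0 X0W) /=.
  have := IH W' cW' W'P.
  move: bX0 bX0'; set a := \sum_(Y in W) g X0 Y; set b := \sum_(Y in W') g Y X0.
  set c := \sum_(i in W') \sum_(j in W') g i j; set s := \sum_(i in W') #|i|.
  move=> h1 h2 h3.
  rewrite mulnDr.
  have : a + b <= 2 * k * d * #|X0| by rewrite -!mulnA mul2n -addnn; apply: leq_add => //; rewrite mulnA.
  move=> h4; rewrite addnA; exact: leq_add.
set N := \sum_x \sum_y (e x y : nat).
have cardT : #|T| = \sum_(Y in PP) #|Y|.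
  rewrite -sum1_card (psum (fun _ => 1)); apply: eq_bigr => Y _; by rewrite sum1_card.
have Nsplit : N = \sum_x \sum_y (e x y && hv x y : nat) +
                  \sum_x \sum_y (e x y && ~~ hv x y : nat).
  rewrite /N -big_split; apply: eq_bigr => x _; rewrite -big_split.
  by apply: eq_bigr => y _; case: (e x y); case: (hv x y).
have Lbound : \sum_x \sum_y (e x y && ~~ hv x y : nat) <= 2 * k * d * #|T|.
  have -> : \sum_x \sum_y (e x y && ~~ hv x y : nat) =
            \sum_(X in PP) \sum_(Y in PP) g X Y.
    rewrite psum; apply: eq_bigr => X _; rewrite /g [RHS]exchange_big /=.
    by apply: eq_bigr => x _; rewrite psum.
  by rewrite cardT; apply: (light #|PP|).
set H1 := \sum_x \sum_y (e x y && (d < Dg e x (P y)) : nat).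
have Hbound : \sum_x \sum_y (e x y && hv x y : nat) <= 2 * H1.
  rewrite mul2n -addnn.
  apply: leq_trans (_ : \sum_x \sum_y ((e x y && (d < Dg e x (P y)) : nat) +
                         (e x y && (d < Dg e y (P x)) : nat)) <= _).
    apply: leq_sum => x _; apply: leq_sum => y _; rewrite /hv.
    by case: (e x y); case: (d < _); case: (d < _).
  rewrite (eq_bigr (fun x => \sum_y (e x y && (d < Dg e x (P y)) : nat) +
                     \sum_y (e x y && (d < Dg e y (P x)) : nat))); last first.
    by move=> x _; rewrite big_split.
  rewrite big_split /= leq_add2l /H1 exchange_big /=.
  apply: eq_leq; apply: eq_bigr => y _; apply: eq_bigr => x _; by rewrite sym.
have H1bound : H1 <= d * #|T|.
  have -> : H1 = \sum_(Y in PP) \sum_x (d < Dg e x Y) * Dg e x Y.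
    rewrite /H1 [RHS]exchange_big /=.
    apply: eq_bigr => x _.
    rewrite psum; apply: eq_bigr => Y YP. 
    rewrite /Dg big_distrr /=; apply: eq_bigr => y yY.
    by rewrite (F1 Y y YP yY); case: (e x y); case: (d < _).
  rewrite cardT big_distrr /=; apply: leq_sum => Y YP.
  apply: heavy_bound => //; first by apply: leq_trans d4.
  by move: YP; rewrite inE => /orP [] ?; [apply: sA | apply: sB].
have main : 2 * #|edge_set e| <= 13 * k * d * #|T|.
  apply: leq_trans (handshake sg) _; rewrite -/N Nsplit.
  apply: leq_trans (leq_add (leq_trans Hbound (leq_mul (leqnn 2) H1bound)) Lbound) _.
  by nia.
rewrite /avg_degree.
case: (posnP #|T|) => [-> | Tpos].
  by rewrite invr0 mulr0 ler0n.
rewrite ler_pdivrMr ?ltr0n // -natrM ler_nat.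
exact: main.
Qed.
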